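(* Let $G$ be a graph, $V\subseteq V(G)$ and $k\geq 0$. If every ordering $SV$ of $V$ has a witnessing matching of size at least $k$, then the partial matching width of $V$ is at least $k/2$.
   Context: Partial matching width of $V\subseteq V(G)$: the largest integer $k$ such that for every ordering of $V$ there is a prefix $SV'$ (viewed as a set) such that $G$ has a matching of size at least $k$ each of whose edges has one endpoint in $SV'$ and the other in $V(G)\setminus SV'$. Witnessing matching: for an ordering $SV$ of $V$, a partition of $SV$ into a prefix $SV_1$ and a suffix $SV_2$ supports an edge $\{u,v\}$ if either one endpoint is in $SV_1$ and the other in $SV_2$, or one endpoint is in $V$ and the other in $V(G)\setminus V$. A matching $M$ is witnessing for $SV$ if some partition of $SV$ into a prefix and a suffix supports every edge of $M$. *)

(* Defs.v *)
From mathcomp Require Import all_boot.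
From mathcomp Require Import boolp.
Set Implicit Arguments. Unset Strict Implicit. Unset Printing Implicit Defensive.

Section Defs.
Variables (T : finType) (e : rel T).

Definition simple_graph : Prop := symmetric e /\ irreflexive e.

Definition is_edge (m : {set T}) : Prop :=
  exists u v, e u v /\ m = [set u; v].

Definition is_matching (M : {set {set T}}) : Prop :=
  (forall m, m \in M -> is_edge m) /\
  (forall m1 m2, m1 \in M -> m2 \in M -> m1 != m2 -> [disjoint m1 & m2]).

Definition is_ordering (V : {set T}) (s : seq T) : Prop :=
  uniq s /\ (forall x, (x \in s) = (x \in V)).

Definition crosses (A : {set T}) (m : {set T}) : Prop :=
  exists u v, m = [set u; v] /\ u \in A /\ v \notin A.

Definition cut_matching (A : {set T}) (j : nat) : Prop :=
  exists M, is_matching M /\ j <= #|M| /\ (forall m, m \in M -> crosses A m).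

Definition pmw_prop (V : {set T}) (j : nat) : Prop :=
  forall s, is_ordering V s ->
    exists i, i <= size s /\ cut_matching [set x in take i s] j.

(* partial matching width: the largest integer j with pmw_prop V j.
   pmw_prop V 0 always holds and pmw_prop V j fails for j > #|T|, so the
   largest such integer is the maximum over j <= #|T|. *)
Definition partial_matching_width (V : {set T}) : nat :=
  \max_(j < #|T|.+1 | `[< pmw_prop V j >]) j.

Definition supports (V : {set T}) (s : seq T) (i : nat) (m : {set T}) : Prop :=
  exists u v, m = [set u; v] /\
    ((u \in take i s /\ v \in drop i s) \/ (u \in V /\ v \notin V)).

Definition witnessing (V : {set T}) (s : seq T) (M : {set {set T}}) : Prop :=
  is_matching M /\
  exists i, i <= size s /\ (forall m, m \in M -> supports V s i m).

End Defs.

(* Main.v *)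
Require Import Defs.
From mathcomp Require Import all_boot.
From mathcomp Require Import boolp.
From mathcomp Require Import zify.

Set Implicit Arguments. Unset Strict Implicit. Unset Printing Implicit Defensive.

Section Aux.
Variables (T : finType) (e : rel T).

Lemma sub_matching (M N : {set {set T}}) :
  is_matching e M -> N \subset M -> is_matching e N.
Proof.
move=> [H1 H2] /subsetP sub; split.
  by move=> m /sub; apply: H1.
by move=> m1 m2 /sub h1 /sub h2; apply: H2.
Qed.

Lemma matching_card (M : {set {set T}}) : is_matching e M -> #|M| <= #|T|.
Proof.
move=> [H1 H2].
have [M0|[m0 m0M]] := set_0Vmem M; first by rewrite M0 cards0.
have [u [v [_ _]]] := H1 m0 m0M.
pose f (m : {set T}) := odflt u [pick x in m].
have fin : forall m, m \in M -> f m \in m.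
  move=> m mM; rewrite /f; case: pickP => //= h.
  have [a [b [_ eab]]] := H1 m mM.
  by move: (h a); rewrite eab in_set2 eqxx.
rewrite -(card_in_imset (f := f)); first exact: max_card.
move=> m1 m2 h1 h2 eq; apply/eqP; apply/negPn/negP => ne.
have := H2 m1 m2 h1 h2 ne; rewrite disjoint_subset => /subsetP /(_ (f m1) (fin _ h1)).
by rewrite inE eq fin.
Qed.

End Aux.

Theorem proposition3 (T : finType) (e : rel T) (V : {set T}) (k : nat) :
  simple_graph e ->
  (forall s, is_ordering V s -> exists M, witnessing e V s M /\ k <= #|M|) ->
  k <= 2 * partial_matching_width e V.
Proof.
move=> _ H.
pose j := k - k./2.
have kj : k <= 2 * j by rewrite /j; have := odd_double_half k; rewrite -addnn; case: (odd k) => /=; lia.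
have kj2 : 2 * j <= k.+1 by rewrite /j; have := odd_double_half k; rewrite -addnn; case: (odd k) => /=; lia.
clearbody j.
suff [pj jT] : pmw_prop e V j /\ j <= #|T|.
  apply: (leq_trans kj); rewrite leq_mul2l; apply/orP; right.
  rewrite /partial_matching_width.
  have := @leq_bigmax_cond _ (fun i : 'I_#|T|.+1 => `[< pmw_prop e V i >]) (fun i => val i) (Ordinal (n:=#|T|.+1) (m:=j) jT).
  by apply; apply/asboolP.
suff main : forall s, is_ordering V s -> exists i, i <= size s /\ cut_matching e [set x in take i s] j.
  split=> //.
  have [|i [_ [M [mM [jM _]]]]] := main (enum V).
    by split; [apply: enum_uniq | move=> x; rewrite mem_enum].
  exact: leq_trans jM (matching_card mM).
move=> s [us sV].
have [M [[mM [i [isz sup]]] kM]] := H s (conj us sV).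
pose A := [set x in take i s].
pose P := [set m : {set T} | `[< crosses A m >]].
have := cardsID P M.
move=> card.
have [j1|j2] : j <= #|M :&: P| \/ j <= #|M :\: P|.
  move: card kM kj kj2; set a := #|M :&: P|; set b := #|M :\: P|; set c := #|M|; lia.
  exists i; split=> //; exists (M :&: P); split.
    by apply: sub_matching mM _; apply: subsetIl.
  split=> // m; rewrite !inE => /andP [_ /asboolP] //.
exists (size s); split=> //; exists (M :\: P); split.
  by apply: sub_matching mM _; apply: subsetDl.
split=> // m; rewrite !inE => /andP [nP mM'].
have [u [v [mE [[hu hv]|[hu hv]]]]] := sup m mM'.
  exfalso; move/asboolP: nP; apply; exists u, v; split=> //; split.
    by rewrite inE.
  rewrite inE; apply/negP => hv'.
  move: us; rewrite -(cat_take_drop i s) cat_uniq => /and3P [_ /hasP hh _].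
  by apply: hh; exists v.
exists u, v; split=> //; rewrite !inE take_size sV; split=> //.
by rewrite sV.
Qed.
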